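(* Let $(X_m)_{m\in[0,\zeta)}$ be a discrete-time (sub-)Markov chain on a countable set $S$ with lifetime $\zeta$, started at $x_0$. Fix $w\in S\setminus\{x_0\}$ and let $T_1=\inf\{n>0:X_n=w\}$, $T_N=\inf\{m>T_{N-1}:X_m=w\}$ ($\inf\emptyset=\infty$). For $N\ge1$ with $\mathbb P[T_N<\infty]>0$, let $LE[0,T_N]$ be the loop erasure of the finite path $(X_0,\ldots,X_{T_N})$. Then the conditional law of $LE[0,T_N]$ given $\{T_N<\infty\}$ equals the conditional law of $LE[0,T_1]$ given $\{T_1<\infty\}$.
   Context: Loop erasure of a finite path $(\xi_0,\ldots,\xi_K)$: set $y_0=\xi_0$; if $y_i$ is defined and $y_i\ne\xi_K$, let $T_i=1+\max\{n\le K:\xi_n=y_i\}$ and $y_{i+1}=\xi_{T_i}$; stop when $y_i=\xi_K$. The loop-erased path is $(y_0,y_1,\ldots)$, a self-avoiding path from $\xi_0$ to $\xi_K$. *)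

(* Defs.v *)
From Stdlib Require Import Reals List.
Import ListNotations.
Open Scope R_scope.
Set Implicit Arguments.

Section LE.
Variable St : Type.
Variable eqd : forall x y : St, {x = y} + {x <> y}.

(* The part of l strictly after the last occurrence of x in l
   (only used when x occurs in l). *)
Fixpoint after_last (x : St) (l : list St) : list St :=
  match l with
  | [] => []
  | y :: t => if in_dec eqd x t then after_last x t
              else if eqd x y then t else y :: t
  end.

(* Loop erasure, following the context: y_0 = xi_0; if y_i <> xi_K,
   y_{i+1} = xi_{T_i} where T_i = 1 + last index of y_i; stop when y_i = xi_K. *)
Fixpoint le_fuel (fuel : nat) (l : list St) : list St :=
  match fuel with
  | O => []
  | Datatypes.S f =>
      match l with
      | [] => []
      | x :: t =>
          match after_last x (x :: t) with
          | [] => [x]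
          | r => x :: le_fuel f r
          end
      end
  end.

Definition loop_erasure (l : list St) : list St := le_fuel (length l) l.

(* xi = (X_0,...,X_K) is the path up to T_N with T_N = K < infinity:
   starts at x0, ends at w, and w is visited exactly N times at times n > 0. *)
Definition stopped_at (x0 w : St) (N : nat) (xi : list St) : Prop :=
  exists t, xi = x0 :: t /\ last t x0 = w /\ count_occ eqd t w = N.
End LE.

Fixpoint sumR (l : list R) : R :=
  match l with [] => 0 | a :: t => a + sumR t end.

Fixpoint path_weight (St : Type) (P : St -> St -> R) (xi : list St) : R :=
  match xi with
  | x :: ((y :: _) as t) => P x y * path_weight P t
  | _ => 1
  end.

(* m is the total mass (sum, possibly infinite series of nonnegative terms)
   of the path weights over the set A of finite paths: the supremum of finite
   partial sums over distinct paths in A. *)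
Definition has_mass (St : Type) (P : St -> St -> R) (A : list St -> Prop) (m : R)
  : Prop :=
  is_lub (fun r => exists L : list (list St),
             NoDup L /\ (forall xi, In xi L -> A xi) /\
             r = sumR (map (path_weight P) L)) m.

(* Main.v *)
Require Import Defs.
From Stdlib Require Import Reals List Permutation Lra Lia.
Import ListNotations.
Open Scope R_scope.
Definition mass {T} (wt : T -> R) (A : T -> Prop) (m : R) : Prop :=
  is_lub (fun r => exists L : list T,
             NoDup L /\ (forall xi, In xi L -> A xi) /\
             r = sumR (map wt L)) m.

Lemma sumR_app (l1 l2 : list R) : sumR (l1 ++ l2) = sumR l1 + sumR l2.
Proof. induction l1; simpl; lra. Qed.

Lemma sumR_nonneg {T} (f : T -> R) (L : list T) :
  (forall x, In x L -> 0 <= f x) -> 0 <= sumR (map f L).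
Proof.
  induction L; simpl; intros H. lra.
  assert (0 <= f a) by auto. assert (0 <= sumR (map f L)) by auto. lra.
Qed.

Lemma sum_incl {T} (f : T -> R) (L K : list T) :
  NoDup L -> incl L K -> (forall x, In x K -> 0 <= f x) ->
  sumR (map f L) <= sumR (map f K).
Proof.
  revert K. induction L as [|a L IH]; intros K HN Hi Hf; simpl.
  - apply sumR_nonneg; auto.
  - inversion HN; subst.
    assert (Ha : In a K) by (apply Hi; left; auto).
    destruct (in_split _ _ Ha) as [l1 [l2 ->]].
    rewrite map_app, sumR_app. simpl.
    assert (sumR (map f L) <= sumR (map f (l1 ++ l2))).
    { apply IH; auto.
      - intros x Hx. assert (In x (l1 ++ a :: l2)) by (apply Hi; right; auto).
        apply in_app_or in H. apply in_or_app. destruct H as [H|[H|H]]; auto.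
        subst; contradiction.
      - intros x Hx; apply Hf. apply in_app_or in Hx; apply in_or_app.
        destruct Hx; auto; right; right; auto. }
    rewrite map_app, sumR_app in H. lra.
Qed.

Lemma mass_nonneg {T} wt (A : T -> Prop) m : mass wt A m -> 0 <= m.
Proof. intros [H _]. apply H. exists []. repeat split; auto. constructor. intros _ []. Qed.

Lemma mass_single {T} wt (A : T -> Prop) m a : mass wt A m -> A a -> wt a <= m.
Proof. intros [H _] Ha. replace (wt a) with (sumR (map wt [a])) by (simpl; lra).
  apply H. exists [a]. repeat split; auto. repeat constructor; auto. intros x [->|[]]; auto. Qed.

Lemma mass_ext {T} wt (A B : T -> Prop) m : (forall x, A x <-> B x) -> mass wt A m -> mass wt B m.
Proof.
  intros He Hm.
  assert (Hs : forall r, (exists L : list T, NoDup L /\ (forall xi, In xi L -> A xi) /\ r = sumR (map wt L)) <->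
           (exists L : list T, NoDup L /\ (forall xi, In xi L -> B xi) /\ r = sumR (map wt L))).
  { intro r; split; intros [L [H1 [H2 H3]]]; exists L; repeat split; auto; intros; apply He; auto. }
  destruct Hm as [H1 H2]; split.
  - intros r Hr; apply H1, Hs, Hr.
  - intros b Hb; apply H2; intros r Hr; apply Hb, Hs, Hr.
Qed.

Lemma mass_bij {T1 T2} (w1 : T1 -> R) (w2 : T2 -> R) (A : T1 -> Prop) (B : T2 -> Prop)
  (f : T1 -> T2) :
  (forall a, A a -> B (f a)) -> (forall b, B b -> exists a, A a /\ f a = b) ->
  (forall a a', A a -> A a' -> f a = f a' -> a = a') ->
  (forall a, A a -> w2 (f a) = w1 a) ->
  forall m, mass w1 A m <-> mass w2 B m.
Proof.
  intros HAB HBA Hinj Hw m.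
  assert (Hs : forall r, (exists L, NoDup L /\ (forall xi, In xi L -> A xi) /\ r = sumR (map w1 L)) <->
           (exists L, NoDup L /\ (forall xi, In xi L -> B xi) /\ r = sumR (map w2 L))).
  { intro r; split.
    - intros [L [H1 [H2 H3]]]. exists (map f L). repeat split.
      + apply FinFun.Injective_map_NoDup_in; auto.
      + intros x Hx. apply in_map_iff in Hx. destruct Hx as [y [<- Hy]]. auto.
      + rewrite H3, map_map. f_equal. apply map_ext_in. intros; symmetry; auto.
    - intros [L [H1 [H2 H3]]].
      assert (Hex : exists L', (forall x, In x L' -> A x) /\ map f L' = L).
      { clear H1 H3. induction L as [|b L IH].
        - exists []; split; auto. intros _ [].
        - destruct IH as [L' [HL' HL'e]]. intros; apply H2; right; auto.
          destruct (HBA b) as [a [Ha Hab]]. apply H2; left; auto.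
          exists (a :: L'); split. intros x [<-|Hx]; auto. simpl; congruence. }
      destruct Hex as [L' [HL' HL'e]]. exists L'. repeat split; auto.
      + apply (NoDup_map_inv f). congruence.
      + rewrite H3, <- HL'e, map_map. f_equal. apply map_ext_in. intros; auto. }
  split; intros [H1 H2]; split.
  - intros r Hr; apply H1, Hs, Hr.
  - intros b Hb; apply H2; intros r Hr; apply Hb, Hs, Hr.
  - intros r Hr; apply H1, Hs, Hr.
  - intros b Hb; apply H2; intros r Hr; apply Hb, Hs, Hr.
Qed.

Lemma NoDup_prod {A B} (l : list A) (l' : list B) : NoDup l -> NoDup l' -> NoDup (list_prod l l').
Proof.
  induction 1 as [|a l Ha Hl IH]; intros Hl'; simpl. constructor.
  apply NoDup_app; auto.
  - apply FinFun.Injective_map_NoDup; auto. intros x y H; congruence.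
  - intros x Hx Hx2. apply in_map_iff in Hx. destruct Hx as [y [<- _]].
    apply in_prod_iff in Hx2. destruct Hx2; contradiction.
Qed.

Lemma sum_prod {A B} (w1 : A -> R) (w2 : B -> R) l l' :
  sumR (map (fun p => w1 (fst p) * w2 (snd p)) (list_prod l l')) =
  sumR (map w1 l) * sumR (map w2 l').
Proof.
  induction l as [|a l IH]; simpl. lra.
  rewrite map_app, sumR_app, IH, map_map. simpl.
  enough (sumR (map (fun x => w1 a * w2 x) l') = w1 a * sumR (map w2 l')) by lra.
  clear. induction l'; simpl; lra.
Qed.

Section Prod.
Context {T1 T2 : Type} (d1 : forall x y : T1, {x = y} + {x <> y})
  (d2 : forall x y : T2, {x = y} + {x <> y})
  (w1 : T1 -> R) (w2 : T2 -> R) (A : T1 -> Prop) (B : T2 -> Prop)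
  (H1 : forall a, 0 <= w1 a) (H2 : forall b, 0 <= w2 b).

Definition wp (p : T1 * T2) := w1 (fst p) * w2 (snd p).
Definition AB (p : T1 * T2) := A (fst p) /\ B (snd p).

Lemma prod_ps u : (forall r, (exists L, NoDup L /\ (forall xi, In xi L -> AB xi) /\ r = sumR (map wp L)) -> r <= u) ->
  forall L1 L2, NoDup L1 -> NoDup L2 -> (forall x, In x L1 -> A x) -> (forall x, In x L2 -> B x) ->
  sumR (map w1 L1) * sumR (map w2 L2) <= u.
Proof.
  intros Hu L1 L2 N1 N2 I1 I2. rewrite <- sum_prod. apply Hu. exists (list_prod L1 L2).
  split; [|split].
  - apply NoDup_prod; auto.
  - intros [x y] Hxy. apply in_prod_iff in Hxy. unfold AB; simpl; destruct Hxy; split; auto.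
  - reflexivity.
Qed.

Lemma prod_bound m1 m2 : mass w1 A m1 -> mass w2 B m2 ->
  forall L, NoDup L -> (forall xi, In xi L -> AB xi) -> sumR (map wp L) <= m1 * m2.
Proof.
  intros Hm1 Hm2 L HN HL.
  set (K1 := nodup d1 (map fst L)). set (K2 := nodup d2 (map snd L)).
  apply Rle_trans with (sumR (map wp (list_prod K1 K2))).
  - apply sum_incl; [exact HN| |].
    + unfold incl. intros [x y] Hx. apply in_prod_iff. unfold K1, K2. rewrite !nodup_In.
      split; apply in_map_iff; eexists; split; [|exact Hx| |exact Hx]; reflexivity.
    + intros; unfold wp; apply Rmult_le_pos; auto.
  - unfold wp. rewrite sum_prod. apply Rmult_le_compat.
    apply sumR_nonneg; auto. apply sumR_nonneg; auto.
    + apply Hm1. exists K1. repeat split. apply NoDup_nodup.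
      intros x Hx. unfold K1 in Hx. rewrite nodup_In in Hx. apply in_map_iff in Hx.
      destruct Hx as [p [<- Hp]]. apply HL; auto.
    + apply Hm2. exists K2. repeat split. apply NoDup_nodup.
      intros x Hx. unfold K2 in Hx. rewrite nodup_In in Hx. apply in_map_iff in Hx.
      destruct Hx as [p [<- Hp]]. apply HL; auto.
Qed.

Lemma prod_mass m1 m2 : mass w1 A m1 -> mass w2 B m2 -> mass wp AB (m1 * m2).
Proof.
  intros Hm1 Hm2. split.
  - intros r [L [HN [HL ->]]]. eapply prod_bound; eauto.
  - intros u Hu.
    assert (Hu0 : 0 <= u). { apply Hu. exists []. split; [constructor|split; [intros _ []|reflexivity]]. }
    assert (Hm10 := mass_nonneg _ _ _ Hm1).
    assert (Hs2 : forall L2, NoDup L2 -> (forall x, In x L2 -> B x) -> m1 * sumR (map w2 L2) <= u).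
    { intros L2 N2 I2.
      assert (0 <= sumR (map w2 L2)) by (apply sumR_nonneg; auto).
      destruct (Req_dec (sumR (map w2 L2)) 0) as [E|E].
      - rewrite E; lra.
      - assert (m1 <= u / sumR (map w2 L2)).
        { apply Hm1. intros r [L1 [N1 [I1 ->]]].
          apply Rmult_le_reg_r with (sumR (map w2 L2)). lra.
          unfold Rdiv. rewrite Rmult_assoc, Rinv_l, Rmult_1_r by lra.
          eapply prod_ps; eauto. }
        apply Rmult_le_reg_r with (/ sumR (map w2 L2)). apply Rinv_0_lt_compat; lra.
        rewrite Rmult_assoc, Rinv_r, Rmult_1_r by lra. exact H0. }
    destruct (Req_dec m1 0) as [E|E]. rewrite E; lra.
    assert (m2 <= u / m1).
    { apply Hm2. intros r [L2 [N2 [I2 ->]]].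
      apply Rmult_le_reg_l with m1. lra. unfold Rdiv.
      rewrite (Rmult_comm u), <- Rmult_assoc, Rinv_r, Rmult_1_l by lra. auto. }
    apply Rmult_le_reg_r with (/ m1). apply Rinv_0_lt_compat; lra.
    rewrite (Rmult_comm m1), Rmult_assoc, Rinv_r, Rmult_1_r by lra. exact H.
Qed.

Lemma prod_pos m1 M : mass w1 A m1 -> mass wp AB M -> 0 < M -> 0 < m1.
Proof.
  intros Hm1 HM HMp. destruct (Rle_lt_dec m1 0) as [E|E]; auto.
  assert (Hm1z : m1 = 0) by (pose proof (mass_nonneg _ _ _ Hm1); lra).
  assert (M <= 0).
  { apply HM. intros r [L [N [I ->]]].
    enough (sumR (map wp L) = 0) by lra.
    clear N. induction L as [|a L IHL]; simpl. reflexivity.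
    rewrite IHL by (intros; apply I; right; auto). destruct (I a (or_introl eq_refl)) as [Ha _].
    assert (w1 (fst a) <= m1) by (eapply mass_single; eauto).
    assert (w1 (fst a) = 0) by (specialize (H1 (fst a)); lra).
    unfold wp; rewrite H0; ring. }
  lra.
Qed.

Lemma prod_div m1 M : mass w1 A m1 -> 0 < m1 -> mass wp AB M -> exists m2, mass w2 B m2.
Proof.
  intros Hm1 Hp HM.
  assert (Hb : forall L2, NoDup L2 -> (forall x, In x L2 -> B x) -> sumR (map w2 L2) <= M / m1).
  { intros L2 N2 I2.
    assert (0 <= sumR (map w2 L2)) by (apply sumR_nonneg; auto).
    destruct (Req_dec (sumR (map w2 L2)) 0) as [E|E].
    - rewrite E. unfold Rdiv. apply Rmult_le_pos. eapply mass_nonneg; eauto.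
      left; apply Rinv_0_lt_compat; auto.
    - assert (m1 <= M / sumR (map w2 L2)).
      { apply Hm1. intros r [L1 [N1 [I1 ->]]].
        apply Rmult_le_reg_r with (sumR (map w2 L2)). lra.
        unfold Rdiv. rewrite Rmult_assoc, Rinv_l, Rmult_1_r by lra.
        eapply prod_ps; eauto. apply HM. }
      apply Rmult_le_reg_l with m1. auto. unfold Rdiv.
      rewrite (Rmult_comm M), <- Rmult_assoc, Rinv_r, Rmult_1_l by lra.
      apply Rmult_le_reg_r with (/ sumR (map w2 L2)). apply Rinv_0_lt_compat; lra.
      rewrite Rmult_assoc, Rinv_r, Rmult_1_r by lra. exact H0. }
  destruct (completeness (fun r => exists L, NoDup L /\ (forall xi, In xi L -> B xi) /\ r = sumR (map w2 L))) as [m2 Hm2].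
  - exists (M / m1). intros r [L [N [I ->]]]. auto.
  - exists 0, []. split; [constructor|split; [intros _ []|reflexivity]].
  - exists m2; exact Hm2.
Qed.
End Prod.
Section Comb.
Variable St : Type.
Variable eqd : forall x y : St, {x = y} + {x <> y}.
Variable w : St.

Fixpoint lsplit (v : St) (l : list St) : list St * list St :=
  match l with
  | [] => ([], [])
  | x :: t => if in_dec eqd v t then let (a, b) := lsplit v t in (x :: a, b)
              else if eqd v x then ([x], t) else ([], x :: t)
  end.

Fixpoint split_at (v : St) (l : list St) : list St * list St :=
  match l with
  | [] => ([], [])
  | x :: t => if eqd x v then ([x], t) else let (c, d) := split_at v t in (x :: c, d)
  end.

Fixpoint find_hit (v : St) (es : list (list St)) : option (list (list St) * list St * list (list St)) :=
  match es with
  | [] => None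
  | e :: es' => if in_dec eqd v e then Some ([], e, es')
                else match find_hit v es' with
                     | None => None
                     | Some (pre, e0, post) => Some (e :: pre, e0, post)
                     end
  end.

Definition bstep (rec : list St -> list (list St) -> list St) (xi : list St) (es : list (list St)) : list St :=
    match xi with
    | [] => []
    | v :: _ =>
      if eqd v w then xi ++ concat es else
      let (l0, r) := lsplit v xi in
      match find_hit v es with
      | None => l0 ++ rec r es
      | Some (pre, e, post) =>
          let (c, d) := split_at v e in
          (v :: d ++ concat post ++ c ++ tl l0) ++ rec r pre
      end
    end.

Fixpoint build (fuel : nat) (xi : list St) (es : list (list St)) : list St :=
  match fuel with
  | O => []
  | S f => bstep (build f) xi es
  end.

Definition seg (l : list St) := exists a, l = a ++ [w] /\ ~ In w a.

Lemma first_occ (x : St) l : In x l -> exists a b, l = a ++ x :: b /\ ~ In x a.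
Proof.
  induction l as [|y l IH]; simpl; [tauto|]. intros H.
  destruct (eqd y x) as [->|n].
  - exists [], l; split; auto.
  - destruct H as [H|H]; [congruence|]. destruct (IH H) as [a [b [-> Ha]]].
    exists (y :: a), b; split; auto. simpl; intros [H'|H']; auto.
Qed.

Lemma last_occ (x : St) l : In x l -> exists a b, l = a ++ x :: b /\ ~ In x b.
Proof.
  induction l as [|y l IH]; simpl; [tauto|]. intros H.
  destruct (in_dec eqd x l) as [i|n].
  - destruct (IH i) as [a [b [-> Hb]]]. exists (y :: a), b; split; auto.
  - destruct H as [<-|H]; [|contradiction]. exists [], l; split; auto.
Qed.

Lemma uniq_first (x : St) a b a' b' : a ++ x :: b = a' ++ x :: b' -> ~ In x a -> ~ In x a' -> a = a' /\ b = b'.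
Proof.
  revert a'. induction a as [|y a IH]; intros [|y' a'] E Ha Ha'; simpl in *.
  - inversion E; auto.
  - inversion E; subst. exfalso; auto.
  - inversion E; subst. exfalso; auto.
  - inversion E; subst. destruct (IH a') as [-> ->]; auto.
Qed.

Lemma uniq_last (x : St) a b a' b' : a ++ x :: b = a' ++ x :: b' -> ~ In x b -> ~ In x b' -> a = a' /\ b = b'.
Proof.
  intros E Hb Hb'.
  assert (E2 : rev b ++ x :: rev a = rev b' ++ x :: rev a').
  { apply (f_equal (@rev St)) in E. rewrite !rev_app_distr in E. simpl in E.
    rewrite <- !app_assoc in E. exact E. }
  apply uniq_first in E2; try (rewrite <- in_rev; auto).
  destruct E2 as [E3 E4]. apply (f_equal (@rev St)) in E3, E4. rewrite !rev_involutive in E3, E4. auto.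
Qed.

Lemma lsplit_eq v a0 b : ~ In v b -> lsplit v (a0 ++ v :: b) = (a0 ++ [v], b).
Proof.
  intros Hb. induction a0 as [|x a0 IH]; simpl.
  - destruct (in_dec eqd v b); [contradiction|]. destruct (eqd v v); congruence.
  - destruct (in_dec eqd v (a0 ++ v :: b)) as [_|n].
    + rewrite IH; auto.
    + exfalso; apply n, in_or_app; right; left; auto.
Qed.

Lemma after_last_eq v a0 b : ~ In v b -> after_last eqd v (a0 ++ v :: b) = b.
Proof.
  intros Hb. induction a0 as [|x a0 IH]; simpl.
  - destruct (in_dec eqd v b); [contradiction|]. destruct (eqd v v); congruence.
  - destruct (in_dec eqd v (a0 ++ v :: b)) as [_|n].
    + rewrite IH; auto.
    + exfalso; apply n, in_or_app; right; left; auto.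
Qed.

Lemma split_at_eq v c d : ~ In v c -> split_at v (c ++ v :: d) = (c ++ [v], d).
Proof.
  intros Hc. induction c as [|x c IH]; simpl.
  - destruct (eqd v v); congruence.
  - destruct (eqd x v) as [->|n]. exfalso; apply Hc; left; auto.
    rewrite IH; auto. intro; apply Hc; right; auto.
Qed.

Lemma find_hit_eq v pre e post : (forall e', In e' pre -> ~ In v e') -> In v e ->
  find_hit v (pre ++ e :: post) = Some (pre, e, post).
Proof.
  intros Hp He. induction pre as [|x pre IH]; simpl.
  - destruct (in_dec eqd v e); [auto|contradiction].
  - destruct (in_dec eqd v x) as [i|n]. exfalso; apply (Hp x); auto; left; auto.
    rewrite IH; auto. intros; apply Hp; right; auto.
Qed.

Lemma find_hit_none v es : find_hit v es = None -> forall e, In e es -> ~ In v e.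
Proof.
  induction es as [|x es IH]; simpl; [tauto|].
  destruct (in_dec eqd v x) as [i|n]; [discriminate|].
  destruct (find_hit v es) as [[[pre e0] post]|]; [discriminate|].
  intros _ e [<-|H]; auto.
Qed.

Lemma find_hit_some v es pre e post : find_hit v es = Some (pre, e, post) ->
  es = pre ++ e :: post /\ (forall e', In e' pre -> ~ In v e') /\ In v e.
Proof.
  revert pre. induction es as [|x es IH]; simpl; intros pre; [discriminate|].
  destruct (in_dec eqd v x) as [i|n].
  - intros H; inversion H; subst. simpl; repeat split; auto.
  - destruct (find_hit v es) as [[[pre0 e0] post0]|] eqn:Ef; [|discriminate].
    intros H; inversion H; subst. destruct (IH pre0 eq_refl) as [-> [H1 H2]].
    simpl; repeat split; auto. intros e' [<-|He']; auto.
Qed.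


Lemma split_at_app v e c d : split_at v e = (c, d) -> e = c ++ d.
Proof.
  revert c d. induction e as [|x e IH]; simpl; intros c d H.
  - inversion H; auto.
  - destruct (eqd x v). inversion H; auto.
    destruct (split_at v e) as [c0 d0]. inversion H; subst. simpl; f_equal; auto.
Qed.

Lemma build_S f v t es a0 r : v <> w -> v :: t = a0 ++ v :: r -> ~ In v r ->
  build (S f) (v :: t) es =
  match find_hit v es with
  | None => (a0 ++ [v]) ++ build f r es
  | Some (pre, e, post) => let (c, d) := split_at v e in
      (v :: d ++ concat post ++ c ++ tl (a0 ++ [v])) ++ build f r pre
  end.
Proof.
  intros Hv E Hr. cbn [build]. unfold bstep. cbv beta iota.
  destruct (eqd v w); [contradiction|]. rewrite E, (lsplit_eq v a0 r Hr). reflexivity.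
Qed.

Lemma tl_loop (v : St) t a0 r : v :: t = a0 ++ v :: r -> v :: tl (a0 ++ [v]) = a0 ++ [v].
Proof. destruct a0 as [|x a1]; simpl; intros E; auto. inversion E; subst; auto. Qed.

Lemma seg_suffix (v : St) a0 r : seg (a0 ++ v :: r) -> v <> w -> seg r /\ ~ In w (a0 ++ [v]).
Proof.
  intros [a [E Ha]] Hv.
  destruct (rev r) as [|x r'] eqn:Er.
  - assert (r = []) by (rewrite <- (rev_involutive r), Er; auto). subst.
    apply app_inj_tail in E. destruct E; congruence.
  - assert (r = rev r' ++ [x]) by (rewrite <- (rev_involutive r), Er; auto). subst r.
    rewrite app_comm_cons, app_assoc in E. apply app_inj_tail in E. destruct E as [E1 E2]. subst.
    split.
    + exists (rev r'); split; auto. intro; apply Ha, in_or_app; right; right; auto.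
    + intros H; apply in_app_or in H; destruct H as [H|[H|[]]]; [|congruence].
      apply Ha, in_or_app; auto.
Qed.

Lemma seg_w t : seg (w :: t) -> t = [].
Proof.
  intros [a [E Ha]]. destruct a as [|y a]. inversion E; auto.
  inversion E; subst. exfalso; apply Ha; left; auto.
Qed.

Lemma seg_nil : ~ seg [].
Proof. intros [a [E _]]. destruct a; discriminate. Qed.

Lemma len_split (a0 : list St) v r : length (a0 ++ v :: r) = (length a0 + S (length r))%nat.
Proof. rewrite length_app; simpl; lia. Qed.

Lemma build_fuel f f' xi es : seg xi -> (length xi <= f)%nat -> (length xi <= f')%nat ->
  build f xi es = build f' xi es.
Proof.
  revert f' xi es. induction f as [|f IH]; intros f' xi es Hs H1 H2.
  - destruct xi; [destruct (seg_nil Hs)|simpl in H1; lia].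
  - destruct f' as [|f']. destruct xi; [destruct (seg_nil Hs)|simpl in H2; lia].
    destruct xi as [|v t]; [destruct (seg_nil Hs)|].
    destruct (eqd v w) as [->|Hv]. simpl. destruct (eqd w w); [auto|congruence].
    destruct (last_occ v (v :: t) (or_introl eq_refl)) as [a0 [r [E Hr]]].
    rewrite !(build_S _ _ _ _ a0 r) by auto.
    rewrite E in Hs, H1, H2. rewrite len_split in H1, H2.
    destruct (seg_suffix _ _ _ Hs Hv) as [Hsr _].
    destruct (find_hit v es) as [[[pre e] post]|].
    + destruct (split_at v e). f_equal. apply IH; auto; lia.
    + f_equal. apply IH; auto; lia.
Qed.

Lemma build_perm f xi es : seg xi -> (length xi <= f)%nat ->
  Permutation (build f xi es) (xi ++ concat es).
Proof.
  revert xi es. induction f as [|f IH]; intros xi es Hs H1.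
  - destruct xi; [destruct (seg_nil Hs)|simpl in H1; lia].
  - destruct xi as [|v t]; [destruct (seg_nil Hs)|].
    destruct (eqd v w) as [->|Hv]. simpl. destruct (eqd w w); [auto|congruence].
    destruct (last_occ v (v :: t) (or_introl eq_refl)) as [a0 [r [E Hr]]].
    rewrite (build_S _ _ _ _ a0 r) by auto. rewrite E.
    rewrite E in Hs, H1. rewrite len_split in H1.
    destruct (seg_suffix _ _ _ Hs Hv) as [Hsr _].
    destruct (find_hit v es) as [[[pre e] post]|] eqn:Ef.
    + destruct (split_at v e) as [c d] eqn:Es.
      destruct (find_hit_some _ _ _ _ _ Ef) as [-> _].
      apply split_at_app in Es. subst e.
      assert (IH' := IH r pre Hsr ltac:(lia)).
      rewrite Permutation_count_occ with (eq_dec := eqd) in IH' |- *. intros x.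
      specialize (IH' x). assert (T := f_equal (fun l => count_occ eqd l x) (tl_loop _ _ _ _ E)).
      simpl in T.
      rewrite concat_app. simpl.
      repeat rewrite count_occ_app in *. simpl in *. repeat rewrite count_occ_app in *. simpl in *.
      destruct (eqd v x); lia.
    + assert (IH' := IH r es Hsr ltac:(lia)).
      rewrite <- !app_assoc. simpl. apply Permutation_app_head. apply perm_skip. exact IH'.
Qed.

Definition ends_w (l : list St) := l = [] \/ exists B, l = B ++ [w].

Lemma concat_ends es : Forall seg es -> ends_w (concat es).
Proof.
  induction 1 as [|e es He Hes IH]; simpl. left; auto.
  right. destruct He as [a [-> _]]. destruct IH as [->|[B ->]].
  - exists a; rewrite app_nil_r; auto.
  - exists (a ++ [w] ++ B). rewrite <- !app_assoc; auto.
Qed.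

Lemma build_last f xi es : seg xi -> (length xi <= f)%nat -> Forall seg es ->
  exists B, build f xi es = B ++ [w].
Proof.
  revert xi es. induction f as [|f IH]; intros xi es Hs H1 Hes.
  - destruct xi; [destruct (seg_nil Hs)|simpl in H1; lia].
  - destruct xi as [|v t]; [destruct (seg_nil Hs)|].
    destruct (eqd v w) as [->|Hv].
    { rewrite (seg_w _ Hs). simpl. destruct (eqd w w); [|congruence].
      destruct (concat_ends _ Hes) as [->|[B ->]]. exists []; auto. exists (w :: B); auto. }
    destruct (last_occ v (v :: t) (or_introl eq_refl)) as [a0 [r [E Hr]]].
    rewrite (build_S _ _ _ _ a0 r) by auto.
    rewrite E in Hs, H1. rewrite len_split in H1.
    destruct (seg_suffix _ _ _ Hs Hv) as [Hsr _].
    destruct (find_hit v es) as [[[pre e] post]|] eqn:Ef.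
    + destruct (split_at v e) as [c d] eqn:Es.
      destruct (find_hit_some _ _ _ _ _ Ef) as [-> _].
      assert (Hp : Forall seg pre) by (apply Forall_app in Hes; tauto).
      destruct (IH r pre Hsr ltac:(lia) Hp) as [B ->].
      eexists. rewrite app_assoc. reflexivity.
    + destruct (IH r es Hsr ltac:(lia) Hes) as [B ->].
      eexists. rewrite app_assoc. reflexivity.
Qed.

Lemma after_last_len x l : (length (after_last eqd x l) <= length l)%nat.
Proof.
  induction l as [|y l IH]; simpl. lia.
  destruct (in_dec eqd x l). lia. destruct (eqd x y); simpl; lia.
Qed.

Lemma le_fuel_indep f f' l : (length l <= f)%nat -> (length l <= f')%nat -> le_fuel eqd f l = le_fuel eqd f' l.
Proof.
  revert f' l. induction f as [|f IH]; intros f' l H1 H2.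
  - destruct l; [destruct f'; auto|simpl in H1; lia].
  - destruct f' as [|f']. destruct l; [auto|simpl in H2; lia].
    destruct l as [|x t]; [auto|]. cbn [le_fuel].
    assert (Hl : (length (after_last eqd x (x :: t)) <= length t)%nat).
    { simpl. destruct (in_dec eqd x t). apply after_last_len. destruct (eqd x x); [simpl; lia|congruence]. }
    destruct (after_last eqd x (x :: t)) as [|y r]; auto.
    f_equal. simpl in *. apply IH; simpl in *; lia.
Qed.

Lemma LE_cons (v : St) a0 B : ~ In v B -> B <> [] -> (exists t, a0 ++ v :: B = v :: t) ->
  loop_erasure eqd (a0 ++ v :: B) = v :: loop_erasure eqd B.
Proof.
  intros HB Hn [t E]. unfold loop_erasure. rewrite E. change (length (v :: t)) with (S (length t)).
  cbn [le_fuel]. assert (Ha : after_last eqd v (v :: t) = B) by (rewrite <- E; apply after_last_eq; auto).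
  rewrite Ha. destruct B as [|y B]; [congruence|]. f_equal. apply le_fuel_indep; auto.
  assert (length (a0 ++ v :: y :: B) = length (v :: t)) by (rewrite E; auto).
  rewrite length_app in H. simpl in *. lia.
Qed.

Lemma LE_w m : ends_w m -> loop_erasure eqd (w :: m) = [w].
Proof.
  intros Hm. assert (Hx : exists a0, w :: m = a0 ++ w :: []).
  { destruct Hm as [->|[B ->]]. exists []; auto. exists (w :: B); auto. }
  destruct Hx as [a0 E]. unfold loop_erasure. change (length (w :: m)) with (S (length m)).
  cbn [le_fuel]. rewrite E at 1. rewrite after_last_eq by (intros []). reflexivity.
Qed.

Lemma in_build_v f xi es x : seg xi -> (length xi <= f)%nat -> In x (build f xi es) ->
  In x xi \/ exists e, In e es /\ In x e.
Proof.
  intros Hs H1 Hx. apply (Permutation_in _ (build_perm f xi es Hs H1)) in Hx.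
  apply in_app_or in Hx. destruct Hx as [H|H]; auto. right. apply in_concat in H.
  destruct H as [e [He Hx]]; eauto.
Qed.

Lemma LE_build f xi es : seg xi -> (length xi <= f)%nat -> Forall seg es ->
  loop_erasure eqd (build f xi es) = loop_erasure eqd xi.
Proof.
  revert xi es. induction f as [|f IH]; intros xi es Hs H1 Hes.
  - destruct xi; [destruct (seg_nil Hs)|simpl in H1; lia].
  - destruct xi as [|v t]; [destruct (seg_nil Hs)|].
    destruct (eqd v w) as [->|Hv].
    { rewrite (seg_w _ Hs). simpl. destruct (eqd w w); [|congruence].
      rewrite LE_w by apply concat_ends, Hes. rewrite LE_w by (left; auto). auto. }
    destruct (last_occ v (v :: t) (or_introl eq_refl)) as [a0 [r [E Hr]]].
    rewrite (build_S _ _ _ _ a0 r) by auto.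
    assert (Hv0 := tl_loop _ _ _ _ E).
    rewrite E. rewrite E in Hs, H1. rewrite len_split in H1.
    destruct (seg_suffix _ _ _ Hs Hv) as [Hsr _].
    assert (Hrn : r <> []) by (intro; subst; apply (seg_nil Hsr)).
    rewrite (LE_cons v a0 r); auto; [|exists t; auto].
    destruct (find_hit v es) as [[[pre e] post]|] eqn:Ef.
    + destruct (split_at v e) as [c d] eqn:Es.
      destruct (find_hit_some _ _ _ _ _ Ef) as [-> [Hpre Hve]].
      assert (Hp : Forall seg pre) by (apply Forall_app in Hes; tauto).
      destruct (first_occ v e Hve) as [c0 [d' [Ee Hc0]]].
      rewrite Ee, split_at_eq in Es by auto. inversion Es; subst c d; clear Es.
      set (B := build f r pre).
      assert (HB : ~ In v B).
      { intro HB. apply in_build_v in HB; auto; [|lia]. destruct HB as [HB|[e' [He' HB]]]; auto.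
        apply (Hpre e'); auto. }
      assert (HBn : B <> []).
      { destruct (build_last f r pre Hsr ltac:(lia) Hp) as [B' HB']. unfold B; rewrite HB'.
        destruct B'; discriminate. }
      replace ((v :: d' ++ concat post ++ (c0 ++ [v]) ++ tl (a0 ++ [v])) ++ B)
        with ((v :: d' ++ concat post ++ c0 ++ a0) ++ v :: B).
      2:{ rewrite <- app_assoc. simpl. f_equal. rewrite <- !app_assoc. f_equal. f_equal. f_equal.
          rewrite Hv0, <- app_assoc. reflexivity. }
      rewrite LE_cons; auto. f_equal. apply IH; auto. lia.
      eexists; reflexivity.
    + set (B := build f r es).
      assert (HB : ~ In v B).
      { intro HB. apply in_build_v in HB; auto; [|lia]. destruct HB as [HB|[e' [He' HB]]]; auto.
        apply (find_hit_none _ _ Ef e'); auto. }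
      assert (HBn : B <> []).
      { destruct (build_last f r es Hsr ltac:(lia) Hes) as [B' HB']. unfold B; rewrite HB'.
        destruct B'; discriminate. }
      rewrite <- app_assoc. simpl. rewrite LE_cons; auto. f_equal. apply IH; auto. lia.
      exists (tl (a0 ++ [v]) ++ B). rewrite app_comm_cons, Hv0, <- app_assoc. reflexivity.
Qed.

Section W.
Variable P : St -> St -> R.
Fixpoint prodR (l : list R) : R := match l with [] => 1 | a :: t => a * prodR t end.
Definition EW (es : list (list St)) := prodR (map (fun e => path_weight P (w :: e)) es).

Lemma prodR_app l1 l2 : prodR (l1 ++ l2) = prodR l1 * prodR l2.
Proof. induction l1; simpl; [ring|rewrite IHl1; ring]. Qed.

Lemma pw_split a (y : St) b : path_weight P (a ++ y :: b) = path_weight P (a ++ [y]) * path_weight P (y :: b).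
Proof.
  induction a as [|x a IH]; simpl. ring.
  destruct a as [|z a]; simpl in *. ring. rewrite IH. ring.
Qed.

Lemma pw_concat es b : Forall seg es -> path_weight P (w :: concat es ++ b) = EW es * path_weight P (w :: b).
Proof.
  induction 1 as [|e es He Hes IH]. unfold EW; simpl; ring.
  destruct He as [a [-> _]]. unfold EW; cbn [map prodR concat]. fold (EW es).
  replace (w :: ((a ++ [w]) ++ concat es) ++ b) with ((w :: a) ++ w :: (concat es ++ b))
    by (simpl; rewrite <- !app_assoc; reflexivity).
  rewrite pw_split, IH. simpl. ring.
Qed.

Lemma build_weight f xi es : seg xi -> (length xi <= f)%nat -> Forall seg es ->
  forall a, path_weight P (a ++ build f xi es) = path_weight P (a ++ xi) * EW es.
Proof.
  revert xi es. induction f as [|f IH]; intros xi es Hs H1 Hes a.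
  - destruct xi; [destruct (seg_nil Hs)|simpl in H1; lia].
  - destruct xi as [|v t]; [destruct (seg_nil Hs)|].
    destruct (eqd v w) as [->|Hv].
    { rewrite (seg_w _ Hs). simpl. destruct (eqd w w); [|congruence].
      simpl. rewrite pw_split. rewrite <- (app_nil_r (concat es)), pw_concat by auto.
      rewrite pw_split with (b := []). simpl. ring. }
    destruct (last_occ v (v :: t) (or_introl eq_refl)) as [a0 [r [E Hr]]].
    rewrite (build_S _ _ _ _ a0 r) by auto.
    assert (Hv0 := tl_loop _ _ _ _ E).
    rewrite E in Hs, H1. rewrite len_split in H1.
    destruct (seg_suffix _ _ _ Hs Hv) as [Hsr _].
    destruct (find_hit v es) as [[[pre e] post]|] eqn:Ef.
    + destruct (split_at v e) as [c d] eqn:Es.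
      destruct (find_hit_some _ _ _ _ _ Ef) as [-> [Hpre Hve]].
      assert (Hp : Forall seg pre) by (apply Forall_app in Hes; tauto).
      assert (Hpost : Forall seg post) by (apply Forall_app in Hes; destruct Hes as [_ He]; inversion He; auto).
      assert (Hse : seg e) by (apply Forall_app in Hes; destruct Hes as [_ He]; inversion He; auto).
      destruct (first_occ v e Hve) as [c0 [d' [Ee Hc0]]].
      rewrite Ee, split_at_eq in Es by auto. inversion Es; subst c d; clear Es.
      assert (Hd : exists d0, d' = d0 ++ [w]).
      { destruct Hse as [x [Ex _]]. rewrite Ee in Ex.
        destruct (rev d') as [|y d1] eqn:Ed.
        - assert (d' = []) by (rewrite <- (rev_involutive d'), Ed; auto). subst.
          apply app_inj_tail in Ex. destruct Ex; congruence.
        - assert (d' = rev d1 ++ [y]) by (rewrite <- (rev_involutive d'), Ed; auto). subst d'.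
          rewrite app_comm_cons, app_assoc in Ex. apply app_inj_tail in Ex. destruct Ex as [_ ->].
          eexists; eauto. }
      destruct Hd as [d0 ->].
      rewrite app_assoc, IH by (auto; lia).
      set (tl0 := tl (a0 ++ [v])) in *.
      replace ((a ++ v :: (d0 ++ [w]) ++ concat post ++ (c0 ++ [v]) ++ tl0) ++ r)
        with ((a ++ v :: d0) ++ w :: (concat post ++ (c0 ++ v :: (tl0 ++ r)))).
      2:{ rewrite <- !app_assoc. simpl. rewrite <- !app_assoc. simpl. rewrite <- !app_assoc. reflexivity. }
      rewrite (pw_split (a ++ v :: d0) w).
      rewrite pw_concat by auto.
      replace (w :: c0 ++ v :: tl0 ++ r) with ((w :: c0) ++ v :: (tl0 ++ r)) by reflexivity.
      rewrite (pw_split (w :: c0) v).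
      replace (v :: tl0 ++ r) with (v :: t).
      2:{ rewrite E. change (v :: tl0 ++ r) with ((v :: tl0) ++ r). rewrite Hv0, <- app_assoc. reflexivity. }
      replace ((a ++ v :: d0) ++ [w]) with (a ++ v :: (d0 ++ [w])) by (rewrite <- app_assoc; reflexivity).
      rewrite (pw_split a v (d0 ++ [w])).
      rewrite (pw_split a v t). rewrite Ee.
      unfold EW. rewrite map_app, prodR_app. cbn [map prodR]. fold (EW pre). fold (EW post).
      replace (w :: c0 ++ v :: d0 ++ [w]) with ((w :: c0) ++ v :: (d0 ++ [w]))
        by reflexivity.
      rewrite (pw_split (w :: c0) v (d0 ++ [w])). ring.
    + rewrite app_assoc, IH by (auto; lia).
      rewrite E, <- !app_assoc. reflexivity.
Qed.


Lemma find_hit_none_eq v es : (forall e, In e es -> ~ In v e) -> find_hit v es = None.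
Proof.
  induction es as [|x es IH]; simpl; auto. intros H.
  destruct (in_dec eqd v x). exfalso; apply (H x); auto. rewrite IH; auto.
Qed.

Lemma build_head f xi es v t : seg xi -> (length xi <= f)%nat -> xi = v :: t ->
  exists B, build f xi es = v :: B.
Proof.
  intros Hs H1 ->. destruct f as [|f]. simpl in H1; lia.
  destruct (eqd v w) as [->|Hv].
  { simpl. destruct (eqd w w); [|congruence]. eexists; reflexivity. }
  destruct (last_occ v (v :: t) (or_introl eq_refl)) as [a0 [r [E Hr]]].
  rewrite (build_S _ _ _ _ a0 r) by auto.
  assert (Hv0 := tl_loop _ _ _ _ E).
  destruct (find_hit v es) as [[[pre e] post]|].
  - destruct (split_at v e). eexists; reflexivity.
  - rewrite <- Hv0. eexists; reflexivity.
Qed.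

Lemma concat_inj es es' : Forall seg es -> Forall seg es' -> concat es = concat es' -> es = es'.
Proof.
  intros H. revert es'. induction H as [|e es He Hes IH]; intros es' H' E.
  - destruct H' as [|e' es' He' _]; auto. destruct He' as [a [-> _]]. simpl in E.
    destruct a; discriminate.
  - destruct H' as [|e' es' He' Hes'].
    + destruct He as [a [-> _]]. simpl in E. destruct a; discriminate.
    + destruct He as [a [-> Ha]]. destruct He' as [a' [-> Ha']]. simpl in E.
      rewrite <- !app_assoc in E. simpl in E.
      destruct (uniq_first _ _ _ _ _ E Ha Ha') as [-> E2]. f_equal. auto.
Qed.

Lemma ends_split M1 M2 z1 z2 : ends_w M1 -> ends_w M2 -> ~ In w z1 -> ~ In w z2 ->
  M1 ++ z1 = M2 ++ z2 -> M1 = M2 /\ z1 = z2.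
Proof.
  intros [->|[B1 ->]] [->|[B2 ->]] H1 H2 E; simpl in E.
  - auto.
  - exfalso. apply H1. rewrite E. rewrite !in_app_iff; simpl; tauto.
  - exfalso. apply H2. rewrite <- E. rewrite !in_app_iff; simpl; tauto.
  - rewrite <- !app_assoc in E. simpl in E. destruct (uniq_last _ _ _ _ _ E H1 H2) as [-> ->]. auto.
Qed.

Lemma seg_e c0 (v : St) d0 : seg (c0 ++ v :: d0 ++ [w]) -> ~ In w c0 /\ ~ In w d0.
Proof.
  intros [x [Ex Hx]]. rewrite app_comm_cons, app_assoc in Ex. apply app_inj_tail in Ex.
  destruct Ex as [<- _]. split; intro; apply Hx; apply in_or_app; auto. right; right; auto.
Qed.

Lemma NF f (v : St) a1 r1 es0 : v <> w -> v :: tl (a1 ++ [v]) = a1 ++ [v] -> ~ In w (a1 ++ [v]) ->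
  Forall seg es0 -> seg r1 -> (length r1 <= f)%nat -> ~ In v r1 ->
  exists L pre, Forall seg pre /\ ~ In v (build f r1 pre) /\
    match find_hit v es0 with
    | None => (a1 ++ [v]) ++ build f r1 es0
    | Some (pre, e, post) => let (c, d) := split_at v e in
        (v :: d ++ concat post ++ c ++ tl (a1 ++ [v])) ++ build f r1 pre
    end = (L ++ [v]) ++ build f r1 pre /\
    (~ In w L -> L = a1 /\ pre = es0) /\
    (In w L -> exists c0 d0 post, L = v :: d0 ++ w :: concat post ++ c0 ++ a1 /\
        es0 = pre ++ (c0 ++ v :: d0 ++ [w]) :: post /\ ~ In v c0 /\ ~ In w c0 /\ ~ In w d0 /\
        Forall seg post).
Proof.
  intros Hv Hv1 Hwa Hes Hsr H1 Hr.
  destruct (find_hit v es0) as [[[pre e] post]|] eqn:Ef.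
  - destruct (split_at v e) as [c d] eqn:Es.
    destruct (find_hit_some _ _ _ _ _ Ef) as [-> [Hpre Hve]].
    assert (Hp : Forall seg pre) by (apply Forall_app in Hes; tauto).
    assert (Hpost : Forall seg post) by (apply Forall_app in Hes; destruct Hes as [_ He]; inversion He; auto).
    assert (Hse : seg e) by (apply Forall_app in Hes; destruct Hes as [_ He]; inversion He; auto).
    destruct (first_occ v e Hve) as [c0 [d' [Ee Hc0]]].
    rewrite Ee, split_at_eq in Es by auto. inversion Es; subst c d; clear Es.
    assert (Hd : exists d0, d' = d0 ++ [w]).
    { destruct Hse as [x [Ex _]]. rewrite Ee in Ex.
      destruct (rev d') as [|y d1] eqn:Ed.
      - assert (d' = []) by (rewrite <- (rev_involutive d'), Ed; auto). subst.
        apply app_inj_tail in Ex. destruct Ex; congruence.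
      - assert (d' = rev d1 ++ [y]) by (rewrite <- (rev_involutive d'), Ed; auto). subst d'.
        rewrite app_comm_cons, app_assoc in Ex. apply app_inj_tail in Ex. destruct Ex as [_ ->].
        eexists; eauto. }
    destruct Hd as [d0 ->]. subst e.
    destruct (seg_e _ _ _ Hse) as [Hwc Hwd].
    exists (v :: d0 ++ w :: concat post ++ c0 ++ a1), pre. split; [auto|split;[|split;[|split]]].
    + intro HB. apply in_build_v in HB; auto. destruct HB as [HB|[e' [He' HB]]]; auto.
      apply (Hpre e'); auto.
    + f_equal. simpl. f_equal. rewrite <- !app_assoc. simpl. f_equal. f_equal.
      rewrite <- !app_assoc. f_equal. simpl. rewrite Hv1. reflexivity.
    + intros H. exfalso; apply H. right. apply in_or_app; right; left; auto.
    + intros _. exists c0, d0, post. repeat split; auto.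
  - exists a1, es0. split; [auto|split;[|split;[|split]]].
    + intro HB. apply in_build_v in HB; auto. destruct HB as [HB|[e' [He' HB]]]; auto.
      apply (find_hit_none _ _ Ef e'); auto.
    + reflexivity.
    + auto.
    + intros H. exfalso. apply Hwa, in_or_app; auto.
Qed.

Lemma build_inj f f' xi xi' es es' : seg xi -> seg xi' -> Forall seg es -> Forall seg es' ->
  (length xi <= f)%nat -> (length xi' <= f')%nat -> build f xi es = build f' xi' es' ->
  xi = xi' /\ es = es'.
Proof.
  revert f' xi xi' es es'. induction f as [|f IH]; intros f' xi xi' es es' Hs Hs' Hes Hes' H1 H1' Eb.
  - destruct xi; [destruct (seg_nil Hs)|simpl in H1; lia].
  - destruct f' as [|f']. destruct xi'; [destruct (seg_nil Hs')|simpl in H1'; lia].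
    destruct xi as [|v t]; [destruct (seg_nil Hs)|]. destruct xi' as [|v' t']; [destruct (seg_nil Hs')|].
    destruct (build_head (S f) (v :: t) es v t Hs H1 eq_refl) as [B0 HB0].
    destruct (build_head (S f') (v' :: t') es' v' t' Hs' H1' eq_refl) as [B0' HB0'].
    assert (v' = v) by congruence. subst v'. clear B0 HB0 B0' HB0'.
    destruct (eqd v w) as [->|Hv].
    { rewrite (seg_w _ Hs), (seg_w _ Hs') in *. simpl in Eb. destruct (eqd w w); [|congruence].
      inversion Eb. split; auto. apply concat_inj; auto. }
    destruct (last_occ v (v :: t) (or_introl eq_refl)) as [a0 [r [E Hr]]].
    destruct (last_occ v (v :: t') (or_introl eq_refl)) as [a0' [r' [E' Hr']]].
    rewrite (build_S _ _ _ _ a0 r), (build_S _ _ _ _ a0' r') in Eb by auto.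
    assert (Hv0 := tl_loop _ _ _ _ E). assert (Hv0' := tl_loop _ _ _ _ E').
    rewrite E in Hs, H1 |- *. rewrite len_split in H1. rewrite E' in Hs', H1' |- *. rewrite len_split in H1'.
    destruct (seg_suffix _ _ _ Hs Hv) as [Hsr Hwa].
    destruct (seg_suffix _ _ _ Hs' Hv) as [Hsr' Hwa'].
    destruct (NF f v a0 r es Hv Hv0 Hwa Hes Hsr ltac:(lia) Hr) as [L [pre [Hp [HvB [EX [Hno Hyes]]]]]].
    destruct (NF f' v a0' r' es' Hv Hv0' Hwa' Hes' Hsr' ltac:(lia) Hr') as [L' [pre' [Hp' [HvB' [EX' [Hno' Hyes']]]]]].
    rewrite EX, EX' in Eb. rewrite <- !app_assoc in Eb. simpl in Eb.
    destruct (uniq_last _ _ _ _ _ Eb HvB HvB') as [<- EB].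
    destruct (IH f' r r' pre pre' Hsr Hsr' Hp Hp' ltac:(lia) ltac:(lia) EB) as [<- <-].
    destruct (in_dec eqd w L) as [i|n].
    + destruct (Hyes i) as [c0 [d0 [post [EL [Ees [Hvc [Hwc [Hwd Hpo]]]]]]]].
      destruct (Hyes' i) as [c0' [d0' [post' [EL' [Ees' [Hvc' [Hwc' [Hwd' Hpo']]]]]]]].
      rewrite EL in EL'. inversion EL' as [EL2]. clear EL'.
      destruct (uniq_first _ _ _ _ _ EL2 Hwd Hwd') as [<- EL3].
      assert (Hwa0 : ~ In w (c0 ++ a0)) by (rewrite in_app_iff; intros [H|H]; [auto|apply Hwa, in_or_app; auto]).
      assert (Hwa0' : ~ In w (c0' ++ a0')) by (rewrite in_app_iff; intros [H|H]; [auto|apply Hwa', in_or_app; auto]).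
      destruct (ends_split _ _ _ _ (concat_ends _ Hpo) (concat_ends _ Hpo') Hwa0 Hwa0' EL3) as [EP EC].
      apply concat_inj in EP; auto. subst post'.
      assert (EC2 : c0 ++ v :: tl (a0 ++ [v]) = c0' ++ v :: tl (a0' ++ [v])).
      { rewrite Hv0, Hv0', !app_assoc, EC. reflexivity. }
      destruct (uniq_first _ _ _ _ _ EC2 Hvc Hvc') as [<- ET].
      assert (Ha : a0 ++ [v] = a0' ++ [v]) by (rewrite <- Hv0, <- Hv0', ET; reflexivity).
      apply app_inj_tail in Ha. destruct Ha as [Ha _]. subst a0'. split; [reflexivity|].
      rewrite Ees, Ees'. reflexivity.
    + destruct (Hno n) as [-> ->]. destruct (Hno' n) as [-> ->]. auto.
Qed.


Lemma exc_decomp n m : (length m <= n)%nat -> ends_w m -> exists es, Forall seg es /\ concat es = m.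
Proof.
  revert m. induction n as [|n IH]; intros m Hl Hm.
  - destruct m; [|simpl in Hl; lia]. exists []; split; auto.
  - destruct Hm as [->|[B ->]]. exists []; split; auto.
    assert (Hi : In w (B ++ [w])) by (apply in_or_app; right; left; auto).
    destruct (first_occ w _ Hi) as [a [b [Eab Ha]]].
    assert (Hb : ends_w b).
    { destruct (rev b) as [|y b1] eqn:Eb.
      - left. rewrite <- (rev_involutive b), Eb; auto.
      - right. assert (b = rev b1 ++ [y]) by (rewrite <- (rev_involutive b), Eb; auto). subst b.
        rewrite app_comm_cons, app_assoc in Eab. apply app_inj_tail in Eab. destruct Eab as [_ <-].
        eexists; eauto. }
    assert (Hlb : (length b <= n)%nat).
    { rewrite Eab in Hl. rewrite length_app in Hl. simpl in Hl. lia. }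
    destruct (IH b Hlb Hb) as [es [Hes Ec]].
    exists ((a ++ [w]) :: es). split.
    + constructor; auto. exists a; split; auto.
    + simpl. rewrite Ec, Eab, <- app_assoc. reflexivity.
Qed.

Lemma build_surj n : forall xi0, (length xi0 <= n)%nat -> (exists B, xi0 = B ++ [w]) ->
  exists xi es, seg xi /\ Forall seg es /\ hd_error xi = hd_error xi0 /\ build (length xi) xi es = xi0.
Proof.
  induction n as [|n IH]; intros xi0 Hl [B EB].
  - destruct xi0; [destruct B; discriminate|simpl in Hl; lia].
  - destruct xi0 as [|v t]; [destruct B; discriminate|].
    destruct (eqd v w) as [->|Hv].
    + assert (Ht : ends_w t).
      { destruct B as [|b B']; simpl in EB; inversion EB; subst; [left|right; eexists]; reflexivity. }
      destruct (exc_decomp (length t) t (le_n _) Ht) as [es [Hes Ec]].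
      exists [w], es. split; [exists []; split; auto|]. split; auto. split; auto.
      simpl. destruct (eqd w w); [|congruence]. rewrite Ec. reflexivity.
    + destruct (last_occ v (v :: t) (or_introl eq_refl)) as [a0 [r [E Hr]]].
      assert (Hv0 := tl_loop _ _ _ _ E).
      assert (Hre : exists B', r = B' ++ [w]).
      { destruct (rev r) as [|y r1] eqn:Er.
        - assert (r = []) by (rewrite <- (rev_involutive r), Er; auto). subst r.
          rewrite E in EB. apply app_inj_tail in EB. destruct EB; congruence.
        - assert (r = rev r1 ++ [y]) by (rewrite <- (rev_involutive r), Er; auto). subst r.
          rewrite E, app_comm_cons, app_assoc in EB. apply app_inj_tail in EB. destruct EB as [_ <-].
          eexists; eauto. }
      assert (Hlr : (length r <= n)%nat).
      { assert (length (v :: t) = length (a0 ++ v :: r)) by (rewrite E; auto).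
        rewrite len_split in H. simpl in *. lia. }
      destruct (IH r Hlr Hre) as [xr [pre [Hsxr [Hpre [_ Hb]]]]].
      assert (Hperm := build_perm _ xr pre Hsxr (le_n _)). rewrite Hb in Hperm.
      assert (Hvx : ~ In v xr).
      { intro H. apply Hr. apply (Permutation_in _ (Permutation_sym Hperm)). apply in_or_app; auto. }
      assert (Hvp : forall e, In e pre -> ~ In v e).
      { intros e He H. apply Hr. apply (Permutation_in _ (Permutation_sym Hperm)). apply in_or_app; right.
        apply in_concat; eauto. }
      destruct Hsxr as [x [Exr Hx]].
      destruct (in_dec eqd w a0) as [Hwa|Hwa].
      * destruct a0 as [|v1 a1]; [destruct Hwa|].
        assert (v1 = v) by (simpl in E; injection E; auto). subst v1.
        assert (Hwa1 : In w a1) by (destruct Hwa; [congruence|auto]).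
        destruct (first_occ w a1 Hwa1) as [d0 [u1 [Ea1 Hwd]]].
        assert (HM : exists M u2, u1 = M ++ u2 /\ ends_w M /\ ~ In w u2).
        { destruct (in_dec eqd w u1) as [i|n0].
          - destruct (last_occ w u1 i) as [m0 [u2 [Eu Hu]]]. exists (m0 ++ [w]), u2.
            split; [rewrite Eu, <- app_assoc; reflexivity|]. split; auto. right; eauto.
          - exists [], u1. split; auto. split; auto. left; auto. }
        destruct HM as [M [u2 [Eu1 [HMe Hwu2]]]].
        assert (Hvu : In v (u2 ++ [v])) by (apply in_or_app; right; left; auto).
        destruct (first_occ v _ Hvu) as [c0 [l2 [Ec Hvc]]].
        assert (Hwc : ~ In w c0).
        { intro H. assert (In w (u2 ++ [v])) by (rewrite Ec; apply in_or_app; auto).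
          apply in_app_or in H0. destruct H0 as [H0|[H0|[]]]; auto. }
        assert (Hwl : ~ In w l2).
        { intro H. assert (In w (u2 ++ [v])) by (rewrite Ec; apply in_or_app; right; right; auto).
          apply in_app_or in H0. destruct H0 as [H0|[H0|[]]]; auto. }
        destruct (exc_decomp (length M) M (le_n _) HMe) as [post [Hpost EM]].
        assert (Ha0' : exists a0', v :: l2 = a0' ++ [v]).
        { destruct (rev l2) as [|y l3] eqn:El.
          - assert (l2 = []) by (rewrite <- (rev_involutive l2), El; auto). subst. exists []; auto.
          - assert (l2 = rev l3 ++ [y]) by (rewrite <- (rev_involutive l2), El; auto). subst l2.
            assert (Ec2 := Ec). rewrite app_comm_cons, app_assoc in Ec2. apply app_inj_tail in Ec2.
            destruct Ec2 as [_ Hy]. subst y. exists (v :: rev l3); auto. }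
        destruct Ha0' as [a0' Ea0'].
        assert (Hse : seg (c0 ++ v :: d0 ++ [w])).
        { exists (c0 ++ v :: d0). split. rewrite <- app_assoc; reflexivity.
          rewrite in_app_iff; simpl; intros [H|[H|H]]; auto. }
        exists ((v :: l2) ++ xr), (pre ++ (c0 ++ v :: d0 ++ [w]) :: post).
        split; [|split; [|split]].
        -- exists (v :: l2 ++ x). split. rewrite Exr, app_assoc; reflexivity.
           simpl; rewrite in_app_iff; intros [H|[H|H]]; auto.
        -- apply Forall_app; split; auto.
        -- reflexivity.
        -- simpl length. rewrite <- app_comm_cons.
           rewrite (build_S _ _ _ _ a0' xr) by (auto; rewrite app_comm_cons, Ea0', <- app_assoc; reflexivity).
           rewrite find_hit_eq by (auto; apply in_or_app; right; left; auto).
           rewrite split_at_eq by auto.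
           assert (Etl : tl (a0' ++ [v]) = l2) by (rewrite <- Ea0'; reflexivity). rewrite Etl.
           rewrite (build_fuel _ (length xr) xr pre); [| exists x; split; auto | rewrite length_app; lia | lia].
           rewrite Hb, E, Ea1, Eu1, EM.
           assert (Hu : u2 ++ v :: r = c0 ++ v :: l2 ++ r).
           { replace (u2 ++ v :: r) with ((u2 ++ [v]) ++ r) by (rewrite <- app_assoc; reflexivity).
             rewrite Ec, <- app_assoc. reflexivity. }
           simpl. rewrite <- !app_assoc. simpl. rewrite <- !app_assoc. simpl. rewrite Hu. reflexivity.
      * exists ((a0 ++ [v]) ++ xr), pre. split; [|split; [auto|split]].
        -- exists (a0 ++ v :: x). split. rewrite Exr, <- !app_assoc; reflexivity.
           rewrite in_app_iff; simpl; intros [H|[H|H]]; auto.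
        -- rewrite <- Hv0. reflexivity.
        -- rewrite <- Hv0. simpl length. rewrite <- app_comm_cons.
           rewrite (build_S _ _ _ _ a0 xr) by (auto; rewrite app_comm_cons, Hv0, <- app_assoc; reflexivity).
           rewrite find_hit_none_eq by auto.
           rewrite (build_fuel _ (length xr) xr pre); [| exists x; split; auto | rewrite length_app; lia | lia].
           rewrite Hb, E, <- app_assoc. reflexivity.
Qed.

End W.
End Comb.
Section Main.
Variable St : Type.
Variable eqd : forall x y : St, {x = y} + {x <> y}.
Variable w : St.

Lemma count_seg l : seg St w l -> count_occ eqd l w = 1%nat.
Proof.
  intros [a [-> Ha]]. rewrite count_occ_app. simpl. destruct (eqd w w); [|congruence].
  rewrite (proj1 (count_occ_not_In eqd a w)) by auto. reflexivity.
Qed.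

Lemma seg_of l : (exists B, l = B ++ [w]) -> count_occ eqd l w = 1%nat -> seg St w l.
Proof.
  intros [B ->] Hc. exists B; split; auto. rewrite count_occ_app in Hc. simpl in Hc.
  destruct (eqd w w); [|congruence]. apply (count_occ_not_In eqd). lia.
Qed.

Lemma count_concat es : Forall (seg St w) es -> count_occ eqd (concat es) w = length es.
Proof.
  induction 1; simpl; auto. rewrite count_occ_app, count_seg by auto. lia.
Qed.

Lemma stopped_iff x0 n xi : x0 <> w ->
  stopped_at eqd x0 w n xi <-> ((exists t, xi = x0 :: t) /\ (exists B, xi = B ++ [w]) /\ count_occ eqd xi w = n).
Proof.
  intros Hx. split.
  - intros [t [-> [Hl Hc]]]. split; [eauto|]. split.
    + destruct (rev t) as [|y t1] eqn:Et.
      * assert (t = []) by (rewrite <- (rev_involutive t), Et; auto). subst t. simpl in Hl. congruence.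
      * assert (t = rev t1 ++ [y]) by (rewrite <- (rev_involutive t), Et; auto). subst t.
        rewrite last_last in Hl. subst y. exists (x0 :: rev t1); auto.
    + simpl. destruct (eqd x0 w); [congruence|auto].
  - intros [[t ->] [[B EB] Hc]]. exists t. split; auto. split.
    + destruct B as [|b B]. simpl in EB. inversion EB; congruence.
      simpl in EB. inversion EB; subst. rewrite last_last. reflexivity.
    + simpl in Hc. destruct (eqd x0 w); [congruence|auto].
Qed.

Lemma pw_nonneg (P : St -> St -> R) (HP0 : forall x y, 0 <= P x y) l : 0 <= path_weight P l.
Proof.
  induction l as [|x l IH]; simpl. lra. destruct l as [|y l]. lra.
  apply Rmult_le_pos; auto.
Qed.

Lemma EW_nonneg (P : St -> St -> R) (HP0 : forall x y, 0 <= P x y) es : 0 <= EW St w P es.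
Proof.
  unfold EW. induction es; cbn [map prodR]. lra. apply Rmult_le_pos; auto. apply pw_nonneg; auto.
Qed.

Lemma key_bij (P : St -> St -> R) x0 (Hw : w <> x0) N (HN : (1 <= N)%nat) (Q : list St -> Prop) m :
  mass (wp (path_weight P) (EW St w P))
    (AB (fun xi => stopped_at eqd x0 w 1 xi /\ Q (loop_erasure eqd xi))
        (fun es => length es = (N - 1)%nat /\ Forall (seg St w) es)) m <->
  mass (path_weight P) (fun xi => stopped_at eqd x0 w N xi /\ Q (loop_erasure eqd xi)) m.
Proof.
  assert (Hx : x0 <> w) by auto.
  apply (mass_bij _ _ _ _ (fun p => build St eqd w (length (fst p)) (fst p) (snd p))).
  - intros [xi es] [[H1 HQ] [Hlen Hes]]. simpl in *.
    apply stopped_iff in H1; auto. destruct H1 as [[t ->] [Hend Hc]].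
    assert (Hs : seg St w (x0 :: t)) by (apply seg_of; auto).
    split.
    + apply stopped_iff; auto. split; [|split].
      * destruct (build_head St eqd w _ _ es x0 t Hs (le_n _) eq_refl) as [B HB]. rewrite HB; eauto.
      * apply (build_last St eqd w); auto.
      *   assert (Hp := proj1 (Permutation_count_occ eqd _ _) (build_perm St eqd w _ _ es Hs (le_n _)) w).
        rewrite Hp, count_occ_app, Hc, count_concat by auto. lia.
    + rewrite LE_build; auto.
  - intros xi [H1 HQ]. apply stopped_iff in H1; auto. destruct H1 as [[t Et] [Hend Hc]].
    destruct (build_surj St eqd w (length xi) xi (le_n _) Hend) as [xi1 [es [Hs [Hes [Hhd Hb]]]]].
    exists (xi1, es). unfold AB; simpl. split; [split; split|exact Hb].
    + apply stopped_iff; auto. split; [|split].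
      * destruct xi1 as [|v t1]. destruct Hs as [a [Ea _]]; destruct a; discriminate.
        rewrite Et in Hhd. simpl in Hhd. inversion Hhd; subst; simpl; eauto.
      * destruct Hs as [a [Ea _]]; eauto.
      * apply count_seg; auto.
    + rewrite <- Hb in HQ. rewrite LE_build in HQ; auto.
    + assert (Hp := proj1 (Permutation_count_occ eqd _ _) (build_perm St eqd w _ _ es Hs (le_n _)) w).
      rewrite Hb, count_occ_app, Hc in Hp. rewrite (count_seg _ Hs), (count_concat _ Hes) in Hp. lia.
    + exact Hes.
  - intros [xi es] [xi' es'] [[H1 _] [_ Hes]] [[H1' _] [_ Hes']]. simpl. intros E.
    apply stopped_iff in H1, H1'; auto.
    destruct H1 as [_ [He Hc]]. destruct H1' as [_ [He' Hc']].
    destruct (build_inj St eqd w P _ _ xi xi' es es' (seg_of _ He Hc) (seg_of _ He' Hc') Hes Hes' (le_n _) (le_n _) E)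
      as [-> ->]. reflexivity.
  - intros [xi es] [[H1 _] [_ Hes]]. simpl. apply stopped_iff in H1; auto.
    destruct H1 as [_ [He Hc]].
    apply (build_weight St eqd w P _ _ _ (seg_of _ He Hc) (le_n _) Hes []).
Qed.
End Main.

Theorem mainTheorem18
  (St : Type) (eqd : forall x y : St, {x = y} + {x <> y})
  (Hcount : exists f : St -> nat, forall x y, f x = f y -> x = y)
  (P : St -> St -> R)
  (HP0 : forall x y, 0 <= P x y)
  (HP1 : forall x (l : list St), NoDup l -> sumR (map (P x) l) <= 1)
  (x0 w : St) (Hw : w <> x0) (N : nat) (HN : (1 <= N)%nat)
  (pN p1 : R)
  (HpN : has_mass P (stopped_at eqd x0 w N) pN)
  (Hp1 : has_mass P (stopped_at eqd x0 w 1) p1)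
  (Hpos : 0 < pN) :
  forall (gamma : list St) (qN q1 : R),
    has_mass P (fun xi => stopped_at eqd x0 w N xi /\ loop_erasure eqd xi = gamma) qN ->
    has_mass P (fun xi => stopped_at eqd x0 w 1 xi /\ loop_erasure eqd xi = gamma) q1 ->
    qN / pN = q1 / p1.
Proof.
  intros gamma qN q1 HqN Hq1.
  set (Bs := fun es : list (list St) => length es = (N - 1)%nat /\ Forall (seg St w) es).
  assert (d1 := list_eq_dec eqd). assert (d2 := list_eq_dec d1).
  assert (H0 : forall a, 0 <= path_weight P a) by (intros; apply pw_nonneg; auto).
  assert (H0' : forall b, 0 <= EW St w P b) by (intros; apply EW_nonneg; auto).
  assert (HpN' : mass (path_weight P) (fun xi => stopped_at eqd x0 w N xi /\ (fun _ => True) (loop_erasure eqd xi)) pN).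
  { apply (mass_ext _ (stopped_at eqd x0 w N)); [tauto|exact HpN]. }
  assert (Hp1' : mass (path_weight P) (fun xi => stopped_at eqd x0 w 1 xi /\ (fun _ => True) (loop_erasure eqd xi)) p1).
  { apply (mass_ext _ (stopped_at eqd x0 w 1)); [tauto|exact Hp1]. }
  apply (key_bij St eqd w P x0 Hw N HN) in HpN'.
  apply (key_bij St eqd w P x0 Hw N HN (fun l => l = gamma)) in HqN.
  assert (Hp1pos : 0 < p1) by (apply (prod_pos _ _ _ _ H0 p1 pN Hp1' HpN' Hpos)).
  destruct (prod_div _ _ _ Bs H0' _ _ Hp1' Hp1pos HpN') as [Rm HR].
  assert (E1 : pN = p1 * Rm).
  { eapply is_lub_u. exact HpN'. apply (prod_mass d1 d2); auto. }
  assert (E2 : qN = q1 * Rm).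
  { eapply is_lub_u. exact HqN. apply (prod_mass d1 d2); auto. }
  assert (HRm : Rm <> 0) by (intro HR0; rewrite E1, HR0 in Hpos; lra).
  rewrite E1, E2. field. split; lra.
Qed.
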